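(* Let $G$ be a Polish group with a comeager conjugacy class. If $N$ is a normal subgroup of $G$ of index less than $2^{\aleph_0}$, then $N=G$.
   Context: A subset of a Polish space is comeager if it contains a countable intersection of dense open sets. *)

(* Defs.v *)
From HB Require Import structures.
From mathcomp Require Import all_boot all_order all_algebra.
From mathcomp Require Import all_classical all_reals all_analysis.
From mathcomp Require Import Rstruct Rstruct_topology.

Set Implicit Arguments.
Unset Strict Implicit.
Unset Printing Implicit Defensive.

Import Order.TTheory GRing.Theory Num.Theory.
Local Open Scope classical_set_scope.
Local Open Scope ring_scope.

Definition is_group (G : Type) (mul : G -> G -> G) (inv : G -> G) (e : G) : Prop :=
  [/\ (forall x y z, mul x (mul y z) = mul (mul x y) z),
      (forall x, mul e x = x), (forall x, mul x e = x),
      (forall x, mul (inv x) x = e) & (forall x, mul x (inv x) = e)].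

Definition is_topological_group (G : topologicalType)
    (mul : G -> G -> G) (inv : G -> G) (e : G) : Prop :=
  [/\ is_group mul inv e,
      continuous (fun p : G * G => mul p.1 p.2) & continuous inv].

Definition separable_space (G : topologicalType) : Prop :=
  exists D : set G, countable D /\ dense D.

Definition is_metric (G : Type) (d : G -> G -> Rdefinitions.R) : Prop :=
  [/\ (forall x y, (0 <= d x y)%R),
      (forall x y, d x y = 0%R <-> x = y),
      (forall x y, d x y = d y x) &
      (forall x y z, (d x z <= d x y + d y z)%R)].

Definition metric_compatible (G : topologicalType) (d : G -> G -> Rdefinitions.R) : Prop :=
  forall A : set G, open A <->
    (forall x, A x -> exists2 eps : Rdefinitions.R, (0 < eps)%R &
       [set y | (d x y < eps)%R] `<=` A).

Definition metric_complete (G : topologicalType) (d : G -> G -> Rdefinitions.R) : Prop :=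
  forall u : nat -> G,
    (forall eps : Rdefinitions.R, (0 < eps)%R -> exists N : nat,
       forall m n : nat, (N <= m)%N -> (N <= n)%N -> (d (u m) (u n) < eps)%R) ->
    exists x : G, u @ \oo --> x.

Definition completely_metrizable (G : topologicalType) : Prop :=
  exists d : G -> G -> Rdefinitions.R, [/\ is_metric d, metric_compatible d & metric_complete d].

Definition polish_space (G : topologicalType) : Prop :=
  separable_space G /\ completely_metrizable G.

Definition polish_group (G : topologicalType)
    (mul : G -> G -> G) (inv : G -> G) (e : G) : Prop :=
  is_topological_group mul inv e /\ polish_space G.

Definition comeager (G : topologicalType) (A : set G) : Prop :=
  exists U : nat -> set G, (forall n, open (U n) /\ dense (U n)) /\
    \bigcap_n U n `<=` A.

Definition conjugacy_class (G : Type) (mul : G -> G -> G) (inv : G -> G) (g : G)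
  : set G := [set mul (mul h g) (inv h) | h in [set: G]].

Definition normal_subgroup (G : Type) (mul : G -> G -> G) (inv : G -> G) (e : G)
    (N : set G) : Prop :=
  [/\ N e, (forall x y, N x -> N y -> N (mul x y)),
      (forall x, N x -> N (inv x)) &
      (forall g x, N x -> N (mul (mul g x) (inv g)))].

Definition cosets (G : Type) (mul : G -> G -> G) (N : set G) : set (set G) :=
  [set [set mul g n | n in N] | g in [set: G]].

(* Index of N less than 2^aleph0 = |P(nat)| : strict cardinal inequality. *)
Definition index_lt_continuum (G : Type) (mul : G -> G -> G) (N : set G) : Prop :=
  ((cosets mul N #<= [set: set nat]) /\ ~ ([set: set nat] #<= cosets mul N))%card.

(* Main.v *)
Require Import Defs.
From mathcomp Require Import all_boot all_order all_algebra.
From mathcomp Require Import all_classical all_reals all_analysis.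
From mathcomp Require Import Rstruct Rstruct_topology.
From mathcomp Require Import lra zify.
Import Order.TTheory GRing.Theory Num.Theory.
Local Open Scope classical_set_scope.
Local Open Scope ring_scope.

Section Metric.
Variables (G : topologicalType) (d : G -> G -> Rdefinitions.R).
Hypothesis hm : is_metric d.
Hypothesis hc : metric_compatible d.

Definition mball (c : G) (r : Rdefinitions.R) := [set y | d c y < r].

Lemma d_ge0 x y : 0 <= d x y. Proof. by case: hm. Qed.
Lemma d_xx x : d x x = 0. Proof. by case: hm => _ h _ _; apply/h. Qed.
Lemma d_sym x y : d x y = d y x. Proof. by case: hm. Qed.
Lemma d_tri x y z : d x z <= d x y + d y z. Proof. by case: hm. Qed.

Lemma mball_open c r : open (mball c r).
Proof.
apply/hc => y Hy; exists (r - d c y); first by rewrite subr_gt0.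
move=> z Hz; rewrite /mball /=.
have := d_tri c y z; rewrite /= in Hy Hz; lra.
Qed.

Lemma mball_center c r : 0 < r -> mball c r c.
Proof. by rewrite /mball /= d_xx. Qed.

Lemma open_mball A x : open A -> A x -> exists2 e, 0 < e & mball x e `<=` A.
Proof. by move=> /hc h /h. Qed.

Lemma mball_sub c r c' r' : d c c' + r' <= r -> mball c' r' `<=` mball c r.
Proof. move=> H z; rewrite /mball /= => Hz; have := d_tri c c' z; lra. Qed.

Lemma mball_shrink c r r' : r' <= r -> mball c r' `<=` mball c r.
Proof. by move=> H z; rewrite /mball /= => Hz; apply: lt_le_trans H. Qed.
End Metric.
Arguments mball_shrink {G d} c r r'.
Arguments mball {G} d c r.
Arguments d_xx {G d} hm x.
Arguments d_tri {G d} hm x y z.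
Arguments d_sym {G d} hm x y.
Arguments mball_open {G d} hm hc c r.
Arguments mball_center {G d} hm c r.
Arguments mball_sub {G d} hm c r c' r'.
Arguments open_mball {G d} hc A x.

Section Group.
Variables (G : topologicalType) (mul : G -> G -> G) (inv : G -> G) (e : G).
Hypothesis htg : is_topological_group mul inv e.

Lemma cont_pair (U : set G) (x0 y z : G) :
  open U -> U (mul (inv y) (mul x0 z)) ->
  exists A B, [/\ open A, open B, A y, B z &
    forall y' z', A y' -> B z' -> U (mul (inv y') (mul x0 z'))].
Proof.
case: htg => _ cm ci oU Uw.
have : nbhs (inv y, mul x0 z) ((fun p : G * G => mul p.1 p.2) @^-1` U).
  apply: (cm (inv y, mul x0 z)).
  by apply: open_nbhs_nbhs; split.
case=> [[Q1 R1]] /= [nQ1 nR1] sQR1.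
have : nbhs (x0, z) ((fun p : G * G => mul p.1 p.2) @^-1` R1) by apply: (cm (x0, z)).
case=> [[Q2 R2]] /= [nQ2 nR2] sQR2.
have nQ : nbhs y (inv @^-1` Q1) by apply: (ci y).
move: nQ; rewrite nbhsE => -[A [oA Ay] sA].
move: nR2; rewrite nbhsE => -[B [oB Bz] sB].
exists A, B; split => // y' z' Ay' Bz'.
apply: (sQR1 (inv y', mul x0 z')); split => /=; first exact: sA.
apply: (sQR2 (x0, z')); split => //=; last exact: sB.
exact: nbhs_singleton.
Qed.

Lemma gA x y z : mul x (mul y z) = mul (mul x y) z. Proof. by case: htg => -[]. Qed.
Lemma g1x x : mul e x = x. Proof. by case: htg => -[]. Qed.
Lemma gx1 x : mul x e = x. Proof. by case: htg => -[]. Qed.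
Lemma gVx x : mul (inv x) x = e. Proof. by case: htg => -[]. Qed.
Lemma gxV x : mul x (inv x) = e. Proof. by case: htg => -[]. Qed.
Lemma gKV a b : mul a (mul (inv a) b) = b. Proof. by rewrite gA gxV g1x. Qed.
Lemma gVK a b : mul (inv a) (mul a b) = b. Proof. by rewrite gA gVx g1x. Qed.
Lemma gVV a : inv (inv a) = a.
Proof. by rewrite -[inv (inv a)]gx1 -(gVx a) gA gVx g1x. Qed.

Lemma ltrans_open a A : open A -> open (mul a @^-1` A).
Proof.
case: htg => _ cm _ oA; rewrite openE => w /= Aaw.
have : nbhs (a, w) ((fun p : G * G => mul p.1 p.2) @^-1` A).
  by apply: (cm (a, w)); apply: open_nbhs_nbhs; split.
case=> [[Q R]] /= [nQ nR] sQR.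
apply: filterS nR => w' Rw'; apply: (sQR (a, w')); split => //=.
exact: nbhs_singleton.
Qed.

Lemma dense_pair (U : set G) (x0 : G) : open U -> dense U ->
  forall A B : set G, open A -> open B -> A !=set0 -> B !=set0 ->
  exists y z, [/\ A y, B z & U (mul (inv y) (mul x0 z))].
Proof.
move=> oU dU A B oA oB [y Ay] [z0 Bz0].
pose B' := mul y @^-1` (mul (inv x0) @^-1` B).
have oB' : open B' by apply: ltrans_open; apply: ltrans_open.
have : B' `&` U !=set0.
  apply: dU => //; exists (mul (inv y) (mul x0 z0)).
  by rewrite /B' /= gKV gVK.
case=> w [B'w Uw]; exists y, (mul (inv x0) (mul y w)); split => //.
by rewrite gKV gVK.
Qed.

End Group.
Arguments gA {G mul inv e}.
Arguments g1x {G mul inv e}.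
Arguments gx1 {G mul inv e}.
Arguments gVx {G mul inv e}.
Arguments gxV {G mul inv e}.
Arguments gKV {G mul inv e}.
Arguments gVK {G mul inv e}.
Arguments gVV {G mul inv e}.
Arguments cont_pair {G mul inv e}.
Arguments dense_pair {G mul inv e}.
Arguments ltrans_open {G mul inv e}.

Section Refine.
Variable (G : topologicalType) (O : nat -> G -> G -> Prop).
Hypothesis Oopen : forall k y z, O k y z -> exists A B, [/\ open A, open B, A y, B z &
    forall y' z', A y' -> B z' -> O k y' z'].
Hypothesis Odense : forall k (A B : set G), open A -> open B -> A !=set0 -> B !=set0 ->
  exists y z, [/\ A y, B z & O k y z].

Lemma refine_list (l : seq (nat * nat * nat)) :
 forall V : nat -> set G, (forall i, open (V i) /\ V i !=set0) ->
 exists V' : nat -> set G, (forall i, [/\ open (V' i), V' i !=set0 & V' i `<=` V i]) /\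
   forall i j k, (i, j, k) \in l -> i != j -> forall y z, V' i y -> V' j z -> O k y z.
Proof.
elim: l => [|[[i j] k] l IH] V hV.
  by exists V; split => // i; case: (hV i) => ? ?; split.
have [V1 [hV1 cV1]] := IH V hV.
have [ij|nij] := eqVneq i j.
  exists V1; split => // i' j' k'; rewrite inE => /orP[/eqP[-> -> ->]|]; first by rewrite ij eqxx.
  exact: cV1.
case: (hV1 i) => oi ni _; case: (hV1 j) => oj nj _.
have [y [z [V1y V1z Oyz]]] := Odense k _ _ oi oj ni nj.
have [A [B [oA oB Ay Bz hAB]]] := Oopen _ _ _ Oyz.
pose V' m := if m == i then V1 i `&` A else if m == j then V1 j `&` B else V1 m.
have sV m : V' m `<=` V1 m.
  rewrite /V'; case: ifP => [/eqP ->|_]; first by move=> ? [].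
  by case: ifP => [/eqP ->|_] //; move=> ? [].
exists V'; split.
  move=> m; case: (hV1 m) => om nm sm; split.
  - rewrite /V'; case: ifP => _; first exact: openI.
    by case: ifP => _ //; exact: openI.
  - rewrite /V'; case: ifP => _; first by exists y.
    by case: ifP => _ //; exists z.
  - by move=> w /sV /sm.
move=> i' j' k'; rewrite inE => /orP[/eqP[-> -> ->]|il] nij' y' z'.
  rewrite /V' eqxx eq_sym (negbTE nij) eqxx => -[_ Ay'] [_ Bz'].
  exact: hAB.
move=> /sV V1y' /sV V1z'; exact: (cV1 _ _ _ il nij').
Qed.
End Refine.

Section Tree.
Variables (G : topologicalType) (d : G -> G -> Rdefinitions.R) (O : nat -> G -> G -> Prop) (x0 : G).
Hypothesis hm : is_metric d.
Hypothesis hc : metric_compatible d.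
Hypothesis Oopen : forall k y z, O k y z -> exists A B, [/\ open A, open B, A y, B z &
    forall y' z', A y' -> B z' -> O k y' z'].
Hypothesis Odense : forall k (A B : set G), open A -> open B -> A !=set0 -> B !=set0 ->
  exists y z, [/\ A y, B z & O k y z].

Definition stT := ((nat -> G) * (nat -> Rdefinitions.R))%type.

Definition Inv n (s : stT) :=
  [/\ forall i, 0 < s.2 i, forall i, s.2 i <= (n.+1%:R)^-1 &
     forall i j k, (i < 2 ^ n)%N -> (j < 2 ^ n)%N -> i != j -> (k <= n)%N ->
       forall y z, mball d (s.1 i) (s.2 i) y -> mball d (s.1 j) (s.2 j) z -> O k y z].

Definition Link (s s' : stT) :=
  forall j, mball d (s'.1 j) (s'.2 j) `<=` mball d (s.1 j./2) (s.2 j./2 / 2).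

Lemma step n s : Inv n s -> exists s', Inv n.+1 s' /\ Link s s'.
Proof.
case=> rpos _ _.
pose V j := mball d (s.1 j./2) (s.2 j./2 / 2).
have hV i : open (V i) /\ V i !=set0.
  split; first exact: mball_open hm hc _ _.
  by exists (s.1 i./2); apply: mball_center hm _ _ _ => //; rewrite divr_gt0.
pose l := [seq (ij, k) | ij <- [seq (i, j) | i <- iota 0 (2 ^ n.+1), j <- iota 0 (2 ^ n.+1)],
   k <- iota 0 n.+2].
have [V' [hV' cV']] := @refine_list G O Oopen Odense l V hV.
have : forall j, exists p : G * Rdefinitions.R, 0 < p.2 /\ mball d p.1 p.2 `<=` V' j.
  move=> j; case: (hV' j) => oj [y V'y] _.
  have [eps eps0 sub] := open_mball hc _ _ oj V'y.
  by exists (y, eps).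
case/choice => f hf.
exists (fun j => (f j).1, fun j => Num.min (f j).2 (n.+2%:R^-1)); split.
- split.
  + move=> i /=; rewrite lt_min; case: (hf i) => -> _ /=.
    by rewrite invr_gt0 ltr0n.
  + by move=> i /=; rewrite ge_min lexx orbT.
  + move=> i j k ilt jlt nij kle y z /= Hy Hz.
    apply: (cV' i j k) => //.
    * apply: (@allpairs_f _ _ _ (fun ij k => (ij, k))).
        by apply: (@allpairs_f _ _ _ (fun i j => (i, j))); rewrite mem_iota add0n.
      by rewrite mem_iota add0n.
    * case: (hf i) => _; apply; apply: (mball_shrink (f i).1) Hy.
      by rewrite ge_min lexx.
    * case: (hf j) => _; apply; apply: (mball_shrink (f j).1) Hz.
      by rewrite ge_min lexx.
- move=> j /= y Hy; case: (hV' j) => _ _; apply.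
  case: (hf j) => _; apply; apply: (mball_shrink (f j).1) Hy.
  by rewrite ge_min lexx.
Qed.

Lemma tree : exists st : nat -> stT, forall n, Inv n (st n) /\ Link (st n) (st n.+1).
Proof.
have : forall p : nat * stT, exists s', Inv p.1 p.2 -> Inv p.1.+1 s' /\ Link p.2 s'.
  move=> [n s]; have [h|h] := pselect (Inv n s).
    by have [s1 Hs1] := @step n s h; exists s1.
  by exists s.
case/choice => f hf.
pose st := fix st n := if n is n'.+1 then f (n', st n') else (fun _ : nat => x0, fun _ : nat => 1 : Rdefinitions.R).
have hinv : forall n, Inv n (st n).
  elim => [|n IH].
    split => //=; first by move=> _; rewrite invr1.
    by move=> i j k; rewrite expn0 !ltnS !leqn0 => /eqP -> /eqP ->.
  by have [] := hf (n, st n) IH.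
by exists st => n; split => //; have [] := hf (n, st n) (hinv n).
Qed.


Hypothesis hcomp : metric_complete d.

Fixpoint node (a : set nat) n : nat :=
  if n is n'.+1 then (`[< a n' >] + (node a n').*2)%N else 0%N.

Lemma node_lt a n : (node a n < 2 ^ n)%N.
Proof.
elim: n => //= n IH; rewrite expnS -muln2; case: (`[< a n >]) => /=; lia.
Qed.

Lemma node_half a n : (node a n.+1)./2 = node a n.
Proof. by rewrite /= half_bit_double. Qed.

Lemma node_inj a b n : node a n = node b n ->
  forall k, (k < n)%N -> `[< a k >] = `[< b k >].
Proof.
elim: n => // n IH H k.
have Hb : `[< a n >] = `[< b n >].
  by move: (congr1 odd H) => /=; rewrite !oddD !odd_double !addbF !oddb.
have Hn : node a n = node b n.
  by have := congr1 half H; rewrite /= !half_bit_double.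
rewrite ltnS leq_eqVlt => /orP[/eqP->|] //; exact: IH.
Qed.

Lemma mycielski : exists F : set nat -> G, forall a b, a <> b -> forall k, O k (F a) (F b).
Proof.
have [st hst] := tree.
pose c a n := (st n).1 (node a n).
pose r a n := (st n).2 (node a n).
have rpos a n : 0 < r a n by case: (hst n) => -[h _ _] _; apply: h.
have rle a n : r a n <= n.+1%:R^-1 by case: (hst n) => -[_ h _] _; apply: h.
have nest a n m : (n < m)%N -> mball d (c a m) (r a m) `<=` mball d (c a n) (r a n / 2).
  elim: m => // m IH; rewrite ltnS leq_eqVlt => /orP[/eqP<-|lt].
    by move=> y; have := (hst n).2 (node a n.+1) y; rewrite /c /r node_half.
  move=> y Hy; apply: (IH lt y).
  apply: (mball_shrink _ (r a m) (r a m / 2)).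
    by have := rpos a m; lra.
  by have := (hst m).2 (node a m.+1) y; rewrite /c /r node_half; apply.
have inball a n m : (n < m)%N -> d (c a n) (c a m) < r a n / 2.
  by move=> lt; apply: (nest a n m lt); apply: mball_center hm _ _ (rpos a m).
have : forall a, exists X, forall n, mball d (c a n) (r a n) X.
  move=> a; have [|X HX] := hcomp (c a).
    move=> eps eps0; pose N := Num.Def.trunc (eps^-1); exists N.+1 => m m' hm1 hm2.
    have h1 := inball a N m hm1; have h2 := inball a N m' hm2.
    have := d_tri hm (c a m) (c a N) (c a m'); rewrite (d_sym hm (c a m) (c a N)).
    have := rle a N.
    have : N.+1%:R^-1 < eps.
      rewrite -[X in _ < X]invrK ltf_pV2 ?posrE ?invr_gt0 ?ltr0n //.
      exact: truncnS_gt.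
    move=> H1 H2 H3; move: H1 H2 H3 h1 h2; set u := r a N; set v := N.+1%:R^-1; set w1 := d _ _; set w2 := d _ _; set w3 := d _ _; move=> *; lra.
  exists X => n.
  have nX : nbhs X (mball d X (r a n / 2)).
    apply: open_nbhs_nbhs; split; first exact: mball_open.
    by apply: mball_center hm _ _ _; have := rpos a n; lra.
  have [M _ HM] := HX _ nX.
  have h2 := HM (maxn M n.+1) (leq_maxl _ _).
  have h1 := inball a n (maxn M n.+1) (leq_maxr _ _).
  rewrite /mball /= in h2 *; rewrite (d_sym hm X) in h2.
  have := d_tri hm (c a n) (c a (maxn M n.+1)) X; lra.
case/choice => F hF; exists F => a b ab k.
have [k0 hk0] : exists k0, `[< a k0 >] != `[< b k0 >].
  apply: contrapT => hne; apply: ab; apply/funext => j; apply/propext.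
  have hj : `[< a j >] = `[< b j >].
    by apply/eqP; apply: contrapT => h; apply: hne; exists j; apply/negP.
  by split => h; [apply/asboolP; rewrite -hj; apply/asboolP | apply/asboolP; rewrite hj; apply/asboolP].
pose n := maxn k0.+1 k.
have nab : node a n != node b n.
  apply/eqP => /node_inj h; move: hk0; rewrite h ?eqxx //.
  exact: leq_maxl.
case: (hst n) => -[_ _ hc3] _.
apply: (hc3 (node a n) (node b n) k (node_lt a n) (node_lt b n) nab (leq_maxr _ _)); exact: hF.
Qed.

End Tree.

Theorem lemma6p4 (G : topologicalType) (mul : G -> G -> G) (inv : G -> G) (e : G) :
  polish_group mul inv e ->
  (exists g : G, comeager (conjugacy_class mul inv g)) ->
  forall N : set G, normal_subgroup mul inv e N ->
  index_lt_continuum mul N ->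
  N = [set: G].
Proof.
move=> [htg [_ [d [hm hc hcomp]]]] [g [U [hU sub]]] N [Ne NM NV NC] [_ hnot].
apply/seteqP; split => // x _.
pose O k y z := U (k./2) (mul (inv y) (mul (if odd k then x else e) z)).
have Oopen k y z : O k y z -> exists A B, [/\ open A, open B, A y, B z &
    forall y' z', A y' -> B z' -> O k y' z'].
  by move=> H; rewrite /O; apply: (cont_pair htg); [case: (hU k./2) | exact: H].
have Odense k (A B : set G) : open A -> open B -> A !=set0 -> B !=set0 ->
    exists y z, [/\ A y, B z & O k y z].
  by move=> oA oB nA nB; case: (hU k./2) => oU dU; rewrite /O; exact: (dense_pair htg _ _ oU dU _ _ oA oB nA nB).
have [F hF] := @mycielski G d O e hm hc Oopen Odense hcomp.
have Wev a b : a <> b -> forall j, U j (mul (inv (F a)) (F b)).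
  move=> ab j; have := hF a b ab j.*2; rewrite /O odd_double doubleK (g1x htg) //.
have Wod a b : a <> b -> forall j, U j (mul (inv (F a)) (mul x (F b))).
  move=> ab j; have := hF a b ab j.*2.+1; rewrite /O /= odd_double uphalf_double //.
have inC w : (forall j, U j w) -> exists h, mul (mul h g) (inv h) = w.
  by move=> hw; have [h _ <-] := sub w (fun j _ => hw j); exists h.
have [Ng|nNg] := pselect (N g).
  have CN w : (forall j, U j w) -> N w.
    by move=> /inC [h <-]; apply: NC.
  have ab : (set0 : set nat) <> setT.
    by move=> h; have : (@setT nat) 0%N by []; rewrite -h.
  have ba : (setT : set nat) <> set0 by move=> h; apply: ab.
  have N2 := CN _ (Wod _ _ ab); have N1 := CN _ (Wev _ _ ba).
  have := NC (F set0) _ (NM _ _ N2 N1).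
  rewrite -(gA htg (inv (F set0))) -(gA htg x) (gKV htg (F setT)) (gKV htg (F set0)) -(gA htg x) (gxV htg) (gx1 htg) //.
exfalso; apply: hnot.
apply/pcard_leP; apply/injfunPex.
exists (fun a => [set mul (F a) n | n in N]).
  by move=> a _; exists (F a).
move=> a b _ _ hab; apply: contrapT => ab.
have : [set mul (F a) n | n in N] (F a) by exists e => //; rewrite (gx1 htg).
rewrite hab => -[n Nn hn].
have [h hw] := inC _ (Wev b a (nesym ab)).
apply: nNg.
have Nw : N (mul (mul h g) (inv h)).
  by rewrite hw -hn (gVK htg).
have := NC (inv h) _ Nw.
by rewrite (gVV htg) -(gA htg h g) (gVK htg h) -(gA htg g) (gVx htg) (gx1 htg).
Qed.
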